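(* Let $\mathcal{X}$ be a totally ordered set equipped with a $\sigma$-algebra $\mathcal{F}$, let $n\ge 1$, and let $\mathcal{S}_{n,\bm{\nu}}$ be the set of labelings $\sigma:\{1,\dots,n\}\to\{1,\dots,K\}$ with $|\sigma^{-1}(k)|=n\nu_k$ for each $k$, for a fixed vector of group proportions $\bm{\nu}=(\nu_1,\dots,\nu_K)$. For $\theta\in\{0,1\}$ and $k\in\{1,\dots,K\}$ let $P_{\theta,k}$ be probability measures on $(\mathcal{X},\mathcal{F})$, and for $\sigma\in\mathcal{S}_{n,\bm{\nu}}$ let $\mathbb{P}_{\theta;\sigma}=\bigotimes_{i=1}^n P_{\theta,\sigma(i)}$ on $(\mathcal{X}^n,\mathcal{F}^{\otimes n})$. For a measurable test $\phi:\mathcal{X}^n\to[0,1]$ define $\mathsf{P_F}(\phi)=\max_{\sigma\in\mathcal{S}_{n,\bm{\nu}}}\mathbb{E}_{\mathbb{P}_{0;\sigma}}[\phi(X^n)]$ and $\mathsf{P_M}(\phi)=\max_{\sigma\in\mathcal{S}_{n,\bm{\nu}}}\mathbb{E}_{\mathbb{P}_{1;\sigma}}[1-\phi(X^n)]$. Then for any measurable test $\psi:\mathcal{X}^n\to[0,1]$ there exists a symmetric test $\phi$ such that $\mathsf{P_F}(\phi)\le\mathsf{P_F}(\psi)$ and $\mathsf{P_M}(\phi)\le\mathsf{P_M}(\psi)$.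
   Context: The ordering map $\Pi:\mathcal{X}^n\to\tilde{\mathcal{X}}^n$, where $\tilde{\mathcal{X}}^n=\{x^n\in\mathcal{X}^n: x_1\ge x_2\ge\dots\ge x_n\}$ with $\sigma$-algebra $\tilde{\mathcal{F}}=\mathcal{F}^{\otimes n}\cap\tilde{\mathcal{X}}^n$, sends $x^n$ to the rearrangement of its coordinates in non-increasing order. A test $\phi:\mathcal{X}^n\to[0,1]$ is called symmetric if $\phi=\tilde{\phi}\circ\Pi$ for some $\tilde{\mathcal{F}}$-measurable $\tilde{\phi}:\tilde{\mathcal{X}}^n\to[0,1]$. The $\sigma$-algebra $\mathcal{F}^{\otimes n}$ is assumed closed under coordinate permutations: for every $\mathcal{A}\in\mathcal{F}^{\otimes n}$ and every permutation $\tau$ of $\{1,\dots,n\}$, $\{(x_{\tau(1)},\dots,x_{\tau(n)}): x^n\in\mathcal{A}\}\in\mathcal{F}^{\otimes n}$. *)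

(* Defs.v *)
From HB Require Import structures.
From mathcomp Require Import all_boot all_order all_algebra.
From mathcomp Require Import all_classical all_reals all_analysis.
Set Implicit Arguments. Unset Strict Implicit. Unset Printing Implicit Defensive.
Import Order.TTheory GRing.Theory Num.Theory.
Local Open Scope classical_set_scope.
Local Open Scope ring_scope.

(* X^n is modelled by n.-tuple T, whose canonical sigma-algebra in
   MathComp-Analysis is the product sigma-algebra F^{(x)n} (generated by the
   coordinate projections). *)

Section Defs.
Context {d : measure_display} {T : measurableType d} {R : realType}.

Definition geR (le : rel T) : rel T := fun a b => le b a.

Definition total_order (le : rel T) : Prop :=
  [/\ reflexive le, antisymmetric le, transitive le & total le].

Definition order_map (le : rel T) (n : nat) (x : n.-tuple T) : n.-tuple T :=
  @Tuple n T (sort (geR le) x)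
    (introT eqP (etrans (size_sort (geR le) x) (size_tuple x))).

Definition ordered_tuples (le : rel T) (n : nat) : set (n.-tuple T) :=
  [set x | sorted (geR le) x].

Definition trace_measurable n (D : set (n.-tuple T)) (f : n.-tuple T -> R) :=
  forall B : set R, measurable B ->
    exists A : set (n.-tuple T), measurable A /\ D `&` f @^-1` B = D `&` A.

Definition is_test n (phi : n.-tuple T -> R) : Prop :=
  measurable_fun [set: n.-tuple T] phi /\ forall x, 0 <= phi x <= 1.

Definition symmetric_test (le : rel T) n (phi : n.-tuple T -> R) : Prop :=
  exists phit : n.-tuple T -> R,
    [/\ trace_measurable (@ordered_tuples le n) phit,
        (forall x, @ordered_tuples le n x -> 0 <= phit x <= 1) &
        phi = (fun x => phit (order_map le x))].

(* mu is the product measure (x)_{i} Ps i on (X^n, F^{(x)n}):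
   its value on measurable rectangles is the product of the marginals
   (this determines it uniquely). *)
Definition is_product_measure n (mu : probability (n.-tuple T) R)
    (Ps : 'I_n -> probability T R) : Prop :=
  forall A : 'I_n -> set T, (forall i, measurable (A i)) ->
    mu [set x | forall i, A i (tnth x i)] = (\prod_(i < n) Ps i (A i))%E.

End Defs.

Definition labeling {R : realType} n K (nu : 'I_K -> R)
    (s : {ffun 'I_n -> 'I_K}) : bool :=
  [forall k, #|[set i | s i == k]|%:R == n%:R * nu k].

Definition PF {d} {T : measurableType d} {R : realType} n K (nu : 'I_K -> R)
  (Pn : bool -> {ffun 'I_n -> 'I_K} -> probability (n.-tuple T) R)
  (phi : n.-tuple T -> R) : \bar R :=
  \big[Order.max/-oo%E]_(s | labeling nu s) (\int[Pn false s]_x (phi x)%:E)%E.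

Definition PM {d} {T : measurableType d} {R : realType} n K (nu : 'I_K -> R)
  (Pn : bool -> {ffun 'I_n -> 'I_K} -> probability (n.-tuple T) R)
  (phi : n.-tuple T -> R) : \bar R :=
  \big[Order.max/-oo%E]_(s | labeling nu s) (\int[Pn true s]_x (1 - phi x)%:E)%E.

(* Main.v *)
Require Import Defs.
From HB Require Import structures.
From mathcomp Require Import all_boot all_order all_algebra.
From mathcomp Require Import all_classical all_reals all_analysis.
From mathcomp Require Import measurable_realfun.
From mathcomp Require Import fingroup perm.
Import Order.TTheory GRing.Theory Num.Theory.
Local Open Scope classical_set_scope.
Local Open Scope ring_scope.

Section helpers.
Context {d : measure_display} {T : measurableType d} {R : realType}.

Definition rect {n} (A : 'I_n -> set T) : set (n.-tuple T) :=
  [set x | forall i, A i (tnth x i)].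

Definition rectG n : set (set (n.-tuple T)) :=
  [set B | exists A : 'I_n -> set T, (forall i, measurable (A i)) /\ B = rect A].

Arguments rectG : clear implicits.

Lemma rect_measurable n (A : 'I_n -> set T) : (forall i, measurable (A i)) ->
  measurable (rect A).
Proof.
move=> mA.
have -> : rect A = \big[setI/setT]_(i < n) ((@tnth n T)^~ i @^-1` A i).
  apply/seteqP; split => x.
    by move=> Ax; rewrite -bigcap_seq => i _; exact: Ax.
  by rewrite -bigcap_seq => Ax i; apply: Ax; exact: mem_index_enum.
apply: (@bigsetI_measurable _ (n.-tuple T)) => i _.
by rewrite -[X in measurable X]setTI; apply: measurable_tnth.
Qed.

Lemma rectG_sub n : rectG n `<=` measurable.
Proof. by move=> _ [A [mA ->]]; exact: rect_measurable. Qed.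

Lemma rectG_setI n : setI_closed (rectG n).
Proof.
move=> _ _ [A [mA ->]] [B [mB ->]]; exists (fun i => A i `&` B i); split.
  by move=> i; apply: measurableI.
apply/seteqP; split => x /=.
  by move=> [Ax Bx] i; split.
by move=> H; split => i; have [] := H i.
Qed.

Lemma measurable_rectG n (E : set (n.-tuple T)) : measurable E -> <<s rectG n >> E.
Proof.
move=> mE; apply: (smallest_sub (@smallest_sigma_algebra _ setT (rectG n)) _ mE).
move=> B; rewrite -bigcup_seq => -[i _ [A mA <-]].
apply: sub_sigma_algebra; exists (fun j => if j == i then A else setT); split.
  by move=> j; case: ifP.
apply/seteqP; split => x /=.
  move=> [_ Ax] j; case: ifP => [/eqP ->|] //.
by move=> H; split => //; have := H i; rewrite eqxx.
Qed.

End helpers.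

Set Implicit Arguments. Unset Strict Implicit. Unset Printing Implicit Defensive.

Section h2.
Context {d : measure_display} {T : measurableType d} {R : realType}.

Definition pt n (s : 'S_n) (x : n.-tuple T) : n.-tuple T := [tuple tnth x (s i) | i < n].

Lemma pt_measurable n (s : 'S_n) : measurable_fun setT (@pt n s).
Proof.
apply/measurable_fun_tnthP => i.
have -> : ((@tnth n T) ^~ i \o @pt n s) = (@tnth n T) ^~ (s i).
  by apply: funext => x /=; rewrite tnth_mktuple.
exact: measurable_tnth.
Qed.

Lemma preimage_pt_rect n (s : 'S_n) (A : 'I_n -> set T) :
  @pt n s @^-1` rect A = rect (fun j => A (s^-1 j)%g).
Proof.
apply/seteqP; split => x /=.
  by move=> H j; have := H (s^-1 j)%g; rewrite /pt tnth_mktuple permKV.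
by move=> H i; rewrite /pt tnth_mktuple; have := H (s i); rewrite permK.
Qed.

Lemma push_rect n (mu : probability (n.-tuple T) R) (Ps : 'I_n -> probability T R)
  (s : 'S_n) (A : 'I_n -> set T) :
  is_product_measure mu Ps -> (forall i, measurable (A i)) ->
  pushforward mu (@pt n s) (rect A) = (\prod_(i < n) Ps (s i) (A i))%E.
Proof.
move=> hp mA; rewrite /pushforward preimage_pt_rect.
rewrite (hp (fun j => A (s^-1 j)%g)); last by move=> j; exact: mA.
rewrite (reindex_inj (@perm_inj _ s)) /=.
by apply: eq_bigr => i _; rewrite permK.
Qed.

Section ptpush.
Variables (n : nat) (mu : probability (n.-tuple T) R) (s : 'S_n).
Definition ptpush : set (n.-tuple T) -> \bar R := pushforward mu (@pt n s).

Let ptpush0 : ptpush set0 = 0%E.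
Proof. by rewrite /ptpush /pushforward preimage_set0 measure0. Qed.

Let ptpush_ge0 A : (0 <= ptpush A)%E.
Proof. by rewrite /ptpush /pushforward; exact: measure_ge0. Qed.

Let ptpush_sigma_additive : semi_sigma_additive ptpush.
Proof.
move=> F mF tF mUF; rewrite /ptpush /pushforward preimage_bigcup.
apply: measure_semi_sigma_additive.
- by move=> k; rewrite -[X in measurable X]setTI; exact: pt_measurable.
- apply/trivIsetP => /= i j _ _ ij; rewrite -preimage_setI.
  by move/trivIsetP : tF => /(_ _ _ _ _ ij) ->//; rewrite preimage_set0.
- by rewrite -preimage_bigcup -[X in measurable X]setTI; exact: pt_measurable.
Qed.

HB.instance Definition _ := isMeasure.Build _ _ _
  ptpush ptpush0 ptpush_ge0 ptpush_sigma_additive.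
End ptpush.


Lemma ptpush_rect n (mu : probability (n.-tuple T) R) (Ps : 'I_n -> probability T R)
  (s : 'S_n) (A : 'I_n -> set T) :
  is_product_measure mu Ps -> (forall i, measurable (A i)) ->
  ptpush mu s (rect A) = (\prod_(i < n) Ps (s i) (A i))%E.
Proof. exact: push_rect. Qed.

Lemma ptpush_setT n (mu : probability (n.-tuple T) R) (s : 'S_n) :
  ptpush mu s setT = 1%E.
Proof. by rewrite /ptpush /pushforward preimage_setT probability_setT. Qed.

Lemma ptpush_eq n (mu nu : probability (n.-tuple T) R) (Ps : 'I_n -> probability T R)
  (s : 'S_n) : is_product_measure mu Ps ->
  is_product_measure nu (fun i => Ps (s i)) ->
  forall E, measurable E -> ptpush mu s E = nu E.
Proof.
move=> hmu hnu E mE.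
apply: (g_sigma_algebra_measure_unique (rectG n) (@rectG_sub _ _ n) (fun _ => setT)) => //.
- move=> _; exists (fun _ => setT); split => //.
  by apply/seteqP; split => x //=.
- by apply/seteqP; split => x //= _; exists 0%N.
- exact: rectG_setI.
- move=> _ [A [mA ->]].
  by apply: eq_trans (ptpush_rect s hmu mA) _; apply/esym/hnu.
- move=> _; apply: (@le_lt_trans _ _ 1%E); last exact: ltry.
  rewrite le_eqVlt; apply/orP; left; apply/eqP.
  exact: ptpush_setT.
- exact: measurable_rectG.
Qed.


Lemma integral_pt n (mu nu : probability (n.-tuple T) R) (Ps : 'I_n -> probability T R)
  (s : 'S_n) (h : n.-tuple T -> R) : is_product_measure mu Ps ->
  is_product_measure nu (fun i => Ps (s i)) ->
  measurable_fun setT h -> (forall x, 0 <= h x) ->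
  (\int[mu]_x (h (@pt n s x))%:E = \int[nu]_x (h x)%:E)%E.
Proof.
move=> hmu hnu mh h0.
transitivity (\int[ptpush mu s]_x (h x)%:E)%E.
  rewrite /ptpush (ge0_integral_pushforward (@pt_measurable n s)) //.
  - exact/measurable_realfun.measurable_EFinP.
  - by move=> y _; rewrite lee_fin.
apply: eq_measure_integral => A mA _.
exact: ptpush_eq hmu hnu A mA.
Qed.

End h2.

Lemma card_cls n K (g : 'I_n -> 'I_K) k :
  #|[set i | g i == k]| = #|[pred i | g i == k]|.
Proof.
apply: eq_card => i; rewrite /in_mem /mem /= /in_set asboolb.
by apply/idP/idP.
Qed.

Lemma labeling_perm (R : realType) n K (nu : 'I_K -> R) (f : {ffun 'I_n -> 'I_K})
  (s : 'S_n) : labeling nu f -> labeling nu [ffun i => f (s i)].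
Proof.
move=> /forallP H; apply/forallP => k.
rewrite card_cls.
have := H k; rewrite card_cls.
have -> : #|[pred i | [ffun i => f (s i)] i == k]| = #|[pred i | f i == k]|.
  have -> : #|[pred i | [ffun i => f (s i)] i == k]| = #|(s @^-1: [set i | f i == k])%SET|.
    by apply: eq_card => i; rewrite !inE ffunE.
  by rewrite card_preimset ?cardsE //; exact: perm_inj.
done.
Qed.

Section h3.
Context {d : measure_display} {T : measurableType d} {R : realType}.

Definition cS n : R := (#|{perm 'I_n}|)%:R.

Lemma cS_gt0 n : 0 < cS n.
Proof. by rewrite /cS ltr0n; apply/card_gt0P; exists 1%g. Qed.

Definition symt n (psi : n.-tuple T -> R) (x : n.-tuple T) : R :=
  (cS n)^-1 * \sum_(s : 'S_n) psi (pt s x).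

Lemma symt_measurable n (psi : n.-tuple T -> R) :
  measurable_fun setT psi -> measurable_fun setT (symt psi).
Proof.
move=> mpsi; apply: measurable_funM; first exact: measurable_cst.
apply: measurable_sum => s.
exact: measurableT_comp mpsi (pt_measurable s).
Qed.

Lemma pt_pt n (s t : 'S_n) (x : n.-tuple T) : pt s (pt t x) = pt (s * t)%g x.
Proof.
by apply: eq_from_tnth => i; rewrite !tnth_mktuple permM.
Qed.

Lemma symt_pt n (psi : n.-tuple T -> R) t x : symt psi (pt t x) = symt psi x.
Proof.
rewrite /symt; congr (_ * _).
rewrite [RHS](reindex_inj (@mulIg _ t)) /=.
by apply: eq_bigr => s _; rewrite pt_pt.
Qed.

Lemma symt_01 n (psi : n.-tuple T -> R) x :
  (forall y, 0 <= psi y <= 1) -> 0 <= symt psi x <= 1.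
Proof.
move=> h; have c0 := cS_gt0 n; apply/andP; split.
  rewrite /symt; apply: mulr_ge0; first by rewrite invr_ge0 ltW.
  by apply: sumr_ge0 => s _; have /andP[] := h (pt s x).
rewrite /symt ler_pdivrMl // mulr1.
apply: le_trans (_ : \sum_(s : 'S_n) (1 : R) <= _).
  by apply: ler_sum => s _; have /andP[] := h (pt s x).
by rewrite sumr_const /cS.
Qed.

Lemma symt_1B n (psi : n.-tuple T -> R) x :
  1 - symt psi x = symt (fun y => 1 - psi y) x.
Proof.
have c0 := cS_gt0 n.
rewrite /symt sumrB sumr_const mulrBr.
congr (_ - _).
by rewrite -[#|xpredT|%:R]/(cS n) mulVf // gt_eqF.
Qed.


Lemma order_map_pt (le : rel T) n (x : n.-tuple T) :
  exists t : 'S_n, order_map le x = pt t x.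
Proof.
have : perm_eq (order_map le x) x by rewrite /order_map /= perm_sort perm_refl.
by case/tuple_permP => t ht; exists t; apply: val_inj; exact: ht.
Qed.

Lemma sym_bound n K (nu : 'I_K -> R) (P : 'I_K -> probability T R)
  (Pn : {ffun 'I_n -> 'I_K} -> probability (n.-tuple T) R)
  (hP : forall f, labeling nu f -> is_product_measure (Pn f) (fun i => P (f i)))
  (h : n.-tuple T -> R) (mh : measurable_fun setT h) (h0 : forall x, 0 <= h x)
  (M : \bar R) (hM : forall f, labeling nu f -> (\int[Pn f]_x (h x)%:E <= M)%E)
  f : labeling nu f -> (\int[Pn f]_x (symt h x)%:E <= M)%E.
Proof.
move=> lf.
have mhs (s : 'S_n) : measurable_fun setT (fun x => (h (pt s x))%:E).
  by apply/measurable_EFinP; exact: measurableT_comp mh (pt_measurable s).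
have eqI : (\int[Pn f]_x (symt h x)%:E = ((cS n)^-1)%:E *
    \sum_(s : 'S_n) \int[Pn [ffun i => f (s i)]]_x (h x)%:E)%E.
  transitivity (\int[Pn f]_x (((cS n)^-1)%:E * \sum_(s : 'S_n) (h (pt s x))%:E))%E.
    by apply: eq_integral => x _; rewrite /symt EFinM sumEFin.
  rewrite ge0_integralZl_EFin //.
  - congr (_ * _)%E; rewrite ge0_integral_sum //.
      apply: eq_bigr => s _; apply: (integral_pt (hP f lf)) => //.
      move=> A mA; rewrite (hP _ (labeling_perm s lf)) //.
      by apply: eq_bigr => i _; rewrite ffunE.
    by move=> s x _; rewrite lee_fin.
  - by move=> x _; apply: sume_ge0 => s _; rewrite lee_fin.
  - exact: emeasurable_sum.
  - by rewrite invr_ge0 ltW // cS_gt0.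
case: M hM => [r| |] hM.
- rewrite eqI; apply: le_trans (_ : ((cS n)^-1)%:E * \sum_(s : 'S_n) r%:E <= _)%E.
    apply: lee_wpmul2l; first by rewrite lee_fin invr_ge0 ltW // cS_gt0.
    by apply: lee_sum => s _; apply: hM; exact: labeling_perm.
  rewrite sumEFin sumr_const -EFinM lee_fin -mulr_natr mulrCA.
  by rewrite -[#|_|%:R]/(cS n) mulVf ?mulr1 // gt_eqF // cS_gt0.
- exact: leey.
- exfalso; have h1 := hM f lf.
  have h2 : (0 <= \int[Pn f]_x (h x)%:E)%E.
    by apply: integral_ge0 => x _; rewrite lee_fin.
  by have := le_trans h2 h1.
Qed.

End h3.

Unset Implicit Arguments. Set Strict Implicit. Set Printing Implicit Defensive.

Theorem lemma2 (d : measure_display) (T : measurableType d) (le : rel T)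
  (R : realType) (n K : nat) (nu : 'I_K -> R)
  (P : bool -> 'I_K -> probability T R)
  (Pn : bool -> {ffun 'I_n -> 'I_K} -> probability (n.-tuple T) R) :
  total_order le ->
  (1 <= n)%N ->
  (forall (th : bool) (s : {ffun 'I_n -> 'I_K}),
      labeling nu s -> is_product_measure (Pn th s) (fun i => P th (s i))) ->
  forall psi : n.-tuple T -> R, is_test psi ->
  exists phi : n.-tuple T -> R,
    [/\ is_test phi, symmetric_test le phi,
        (PF nu Pn phi <= PF nu Pn psi)%E & (PM nu Pn phi <= PM nu Pn psi)%E].
Proof.
move=> _ _ hP psi [mpsi psi01].
have ms := symt_measurable mpsi.
exists (symt psi); split.
- by split => // x; exact: symt_01.
- exists (symt psi); split.
  + move=> B mB; exists (symt psi @^-1` B); split => //.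
    by rewrite -[X in measurable X]setTI; exact: ms.
  + by move=> x _; exact: symt_01.
  + apply: funext => x; have [t ->] := order_map_pt le x.
    by rewrite symt_pt.
- rewrite /PF; apply: bigmax_le => [|f lf]; first exact: leNye.
  apply: (sym_bound (hP false)) => //.
  + by move=> x; have /andP[] := psi01 x.
  + by move=> f' lf'; exact: (le_bigmax_cond _ _ lf').
- rewrite /PM; apply: bigmax_le => [|f lf]; first exact: leNye.
  under eq_integral => x _ do rewrite symt_1B.
  apply: (sym_bound (hP true) (h := fun y => 1 - psi y)) => //.
  + by apply: measurable_funB => //; exact: measurable_cst.
  + by move=> x; have /andP[_] := psi01 x; rewrite subr_ge0.
  + by move=> f' lf'; exact: (le_bigmax_cond _ _ lf').
Qed.
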